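(* Let $V$ be a finite vertex set with $|V| = n$ and let $\{k_u\}_{u\in V}$ be a degree sequence with $k_u \ge 1$ for all $u$. Then the graph of loopy-multigraphs $\mathcal{G}_{lm}(\{k_u\})$ is connected: for any two loopy-multigraphs $G, G'$ on $V$ with degree sequence $\{k_u\}$, there is a finite sequence of double edge swaps transforming $G$ into $G'$ such that every intermediate graph is also a loopy-multigraph on $V$ with degree sequence $\{k_u\}$.
   Context: All graphs are on a fixed labeled vertex set $V$; a graph is a multiset $E$ of unordered pairs $(u,v)$ with $u,v\in V$, where a pair $(u,u)$ is a self-loop and an edge occurring more than once is a multiedge (or multiple self-loop, if it is a loop). The degree $k_u$ of $u$ is the number of edge-endpoints at $u$, so each self-loop at $u$ contributes $2$ to $k_u$. A loopy-multigraph is such a graph in which each self-loop occurs at most once (no multiple self-loops) but non-loop edges may have any multiplicity. A double edge swap $(u,v),(x,y)\leadsto(u,x),(v,y)$ on a graph removes one copy of each of two edge occurrences $(u,v)$ and $(x,y)$ (loops allowed, i.e. possibly $u=v$ or $x=y$) and adds the edges $(u,x)$ and $(v,y)$; since edges are unordered, either pairing of endpoints may be used. It preserves the degree sequence. The graph of loopy-multigraphs $\mathcal{G}_{lm}(\{k_u\})$ has as vertices all loopy-multigraphs on $V$ with degree sequence $\{k_u\}$, with two distinct such graphs adjacent if one is obtained from the other by a single double edge swap. *)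

(* Defs.v *)
From mathcomp Require Import all_boot.
From Stdlib Require Import Relation_Operators.
Set Implicit Arguments. Unset Strict Implicit. Unset Printing Implicit Defensive.

(* A graph on the finite vertex set V is a multiset of unordered pairs,
   encoded by its multiplicity function: G u v = number of occurrences of
   the unordered pair {u,v} (G u u = number of self-loops at u). *)
Definition graph (V : finType) := V -> V -> nat.

Definition symmetric_graph (V : finType) (G : graph V) : Prop :=
  forall u v, G u v = G v u.

(* degree: each self-loop contributes 2 *)
Definition degree (V : finType) (G : graph V) (u : V) : nat :=
  (\sum_(v : V) G u v) + G u u.

Definition loopy_multigraph (V : finType) (G : graph V) : Prop :=
  symmetric_graph G /\ forall u, G u u <= 1.

Definition edge1 (V : finType) (a b : V) : graph V :=
  fun i j => nat_of_bool (((i == a) && (j == b)) || ((i == b) && (j == a))).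

(* double edge swap (u,v),(x,y) ~> (u,x),(v,y): remove one copy of each of
   the two edge occurrences (u,v), (x,y) (which must be present, counted with
   multiplicity) and add (u,x),(v,y). *)
Definition double_edge_swap (V : finType) (G G' : graph V) : Prop :=
  exists u v x y : V,
    (forall i j, edge1 u v i j + edge1 x y i j <= G i j) /\
    (forall i j, G' i j = G i j - edge1 u v i j - edge1 x y i j
                          + edge1 u x i j + edge1 v y i j).

Definition in_Glm (V : finType) (k : V -> nat) (G : graph V) : Prop :=
  loopy_multigraph G /\ forall u, degree G u = k u.

Definition Glm_adj (V : finType) (k : V -> nat) (G G' : graph V) : Prop :=
  in_Glm k G /\ in_Glm k G' /\ G <> G' /\ double_edge_swap G G'.

(* Main.v *)
Require Import Defs.
From mathcomp Require Import all_boot.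
From Stdlib Require Import Relation_Operators.
From Stdlib Require Import FunctionalExtensionality.
From mathcomp Require Import zify.
Set Implicit Arguments. Unset Strict Implicit. Unset Printing Implicit Defensive.


Lemma edge1_le1 (V : finType) (a b i j : V) : edge1 a b i j <= 1.
Proof. by rewrite /edge1; case: (_ || _). Qed.

Lemma edge1_sym (V : finType) (a b i j : V) : edge1 a b i j = edge1 a b j i.
Proof. rewrite /edge1; by case: (i == a); case: (j == b); case: (i == b); case: (j == a). Qed.

Lemma edge1_self (V : finType) (a b : V) : edge1 a b a b = 1.
Proof. by rewrite /edge1 !eqxx. Qed.

Lemma edge1P (V : finType) (a b i j : V) :
  edge1 a b i j = 0 \/ (edge1 a b i j = 1 /\ ((i = a /\ j = b) \/ (i = b /\ j = a))).
Proof.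
rewrite /edge1; case: (eqVneq i a) => [ia|ia]; case: (eqVneq j b) => [jb|jb];
  case: (eqVneq i b) => [ib|ib]; case: (eqVneq j a) => [ja|ja] /=; intuition.
Qed.

Lemma edge1_bound (V : finType) (a b i j : V) :
  edge1 a b i j <= (i == a) * (j == b) + (i == b) * (j == a).
Proof. rewrite /edge1; by case: (i == a); case: (j == b); case: (i == b); case: (j == a). Qed.

Lemma sum_ind (V : finType) (x : V) : \sum_(v : V) ((v == x) : nat) = 1.
Proof.
rewrite (bigD1 x) //= eqxx big1 // => v; by case: eqP.
Qed.

Lemma sum2_ind (V : finType) (x y : V) :
  \sum_(i : V) \sum_(j : V) ((i == x) * (j == y)) = 1.
Proof.
rewrite (bigD1 x) //= [X in _ + X]big1 => [|i hi]; last by rewrite big1 // => j _; rewrite (negbTE hi).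
rewrite addn0 (eq_bigr (fun j => ((j == y) : nat))) ?sum_ind // => j _.
by rewrite eqxx mul1n.
Qed.

Lemma sum_le_gen (V : finType) (f d g e : V -> nat) :
  (forall v, f v + d v <= g v + e v) ->
  \sum_v f v + \sum_v d v <= \sum_v g v + \sum_v e v.
Proof. move=> H; rewrite -!big_split /=; exact: leq_sum. Qed.

Lemma degree_edge1 (V : finType) (a b u : V) :
  degree (edge1 a b) u = (u == a) + (u == b).
Proof.
rewrite /degree.
case: (eqVneq u a) => [->|ua]; case: (eqVneq a b) => [<-|ab].
- rewrite (eq_bigr (fun v => ((v == a) : nat))) ?sum_ind ?edge1_self //.
  by move=> v _; rewrite /edge1 eqxx /= orbb.
- rewrite (eq_bigr (fun v => ((v == b) : nat))) ?sum_ind.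
    by rewrite /edge1 eqxx (negbTE ab).
  by move=> v _; rewrite /edge1 eqxx (negbTE ab) /= orbF.
- rewrite (eq_bigr (fun v => 0)) ?big1 //.
    by rewrite /edge1 (negbTE ua).
  by move=> v _; rewrite /edge1 (negbTE ua).
- case: (eqVneq u b) => [->|ub].
  + rewrite (eq_bigr (fun v => ((v == a) : nat))) ?sum_ind.
      by rewrite /edge1 eq_sym (negbTE ab) eqxx.
    by move=> v _; rewrite /edge1 eqxx eq_sym (negbTE ab).
  + rewrite (eq_bigr (fun v => 0)) ?big1 //.
      by rewrite /edge1 (negbTE ua) (negbTE ub).
    by move=> v _; rewrite /edge1 (negbTE ua) (negbTE ub).
Qed.



Lemma F1gen (V : finType) (H1 H2 : graph V)
  (hdeg : forall u, degree H1 u = degree H2 u) (a c : V) :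
  H1 a c < H2 a c -> exists b, H2 a b < H1 a b.
Proof.
move=> hac.
case: (pickP (fun b => H2 a b < H1 a b)) => [b hb|hn]; first by exists b.
exfalso.
have := @sum_le_gen V (fun v => H1 a v) (fun v => ((v == c) : nat))
          (fun v => H2 a v) (fun _ => 0).
rewrite sum_ind big1_eq => H.
have := hn a; have := hdeg a; rewrite /degree /= => hd ha.
have : \sum_v H1 a v + 1 <= \sum_v H2 a v + 0.
  apply: H => v; have := hn v => /= hv.
  case: (eqVneq v c) => [->|]; simpl; lia.
lia.
Qed.

Lemma F2 (V : finType) (G G' : graph V)
  (hdeg : forall u, degree G u = degree G' u) (hl : forall u, G' u u <= 1) (p : V) :
  G p p < G' p p -> exists b d, G' p b < G p b /\ G' p d < G p d /\
                               (b <> d \/ G' p b + 2 <= G p b).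
Proof.
move=> hpp.
have [b hb] := F1gen hdeg hpp.
case: (pickP (fun d => (d != b) && (G' p d < G p d))) => [d /andP[db hd]|hn].
  exists b, d; split => //; split => //; left; move/eqP: db; auto.
case: (leqP (G' p b + 2) (G p b)) => hb2.
  by exists b, b; split => //; split => //; right.
exfalso.
have hpb : p != b by apply/eqP => E; move: hb hpp; rewrite E; lia.
have := @sum_le_gen V (fun v => G p v) (fun v => ((v == p) : nat))
          (fun v => G' p v) (fun v => ((v == b) : nat)).
rewrite !sum_ind => H.
have := hdeg p; have := hl p; rewrite /degree /= => hl1 hd.
have : \sum_v G p v + 1 <= \sum_v G' p v + 1.
  apply: H => v; have := hn v => /= hv.
  case: (eqVneq v p) => [->|vp].
    by rewrite (negbTE hpb); lia.
  case: (eqVneq v b) => [->|vb]; first by lia.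
  by move: hv; rewrite /= => /negbT; rewrite negb_and negbK (negbTE vb) /= -leqNgt; lia.
lia.
Qed.



Definition good (V : finType) (G G' : graph V) (a b c d : V) : Prop :=
  [/\ G a c < G' a c, G' a b < G a b, G' c d < G c d,
      ~ ((a = c /\ b = d) \/ (a = d /\ b = c)) \/ G' a b + 2 <= G a b
    & b <> d \/ G b b = 0].

Lemma Xstep (V : finType) (G G' : graph V)
  (hs : symmetric_graph G) (hs' : symmetric_graph G')
  (hdeg : forall u, degree G u = degree G' u) (x a1 a2 : V) :
  G' x x <= G x x -> a1 <> a2 -> G' x a1 < G x a1 -> G' x a2 < G x a2 ->
  exists a b c d, good G G' a b c d.
Proof.
move=> hxx a12 hx1 hx2.
have hdeg' : forall u, degree G' u = degree G u by move=> u; rewrite hdeg.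
have [y hy] := F1gen hdeg' hx1.
have hyx : G y x < G' y x by rewrite hs hs'.
have [d hd] := F1gen hdeg hyx.
case: (eqVneq a1 d) => [E|ne].
- exists x, a2, y, d; split => //.
  + left => -[[E1 E2]|[E1 E2]]; subst.
    * lia.
    * lia.
  + by left => E2; subst; auto.
- exists x, a1, y, d; split => //.
  + left => -[[E1 E2]|[E1 E2]]; subst.
    * lia.
    * lia.
  + by left => E2; subst; move: ne; rewrite eqxx.
Qed.

Lemma Xstep2 (V : finType) (G G' : graph V)
  (hs : symmetric_graph G) (hs' : symmetric_graph G')
  (hl' : forall u, G' u u <= 1)
  (hdeg : forall u, degree G u = degree G' u) (p x : V) :
  G p p < G' p p -> G' p x < G p x -> G x x = 1 ->
  exists a b c d, good G G' a b c d.
Proof.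
move=> hpp hpx hxx.
have hdeg' : forall u, degree G' u = degree G u by move=> u; rewrite hdeg.
have hxp : G' x p < G x p by rewrite hs hs'.
have [y hy] := F1gen hdeg' hxp.
have hyx : G y x < G' y x by rewrite hs hs'.
have [d hd] := F1gen hdeg hyx.
have hlp := hl' p; have hlx := hl' x.
have hxy : x <> y by move=> E; subst; lia.
case: (eqVneq d p) hd => [-> hd|ne hd].
- exists p, x, p, y; split => //.
  + by rewrite hs hs'.
  + left => -[[_ E]|[E1 E2]]; first by auto.
    subst; lia.
  + by left.
- exists x, p, y, d; split => //.
  + left => -[[E1 E2]|[E1 E2]]; first by auto.
    subst; lia.
  + by left => E; subst; move: ne; rewrite eqxx.
Qed.

Lemma exists_good (V : finType) (G G' : graph V)
  (hs : symmetric_graph G) (hs' : symmetric_graph G')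
  (hl : forall u, G u u <= 1) (hl' : forall u, G' u u <= 1)
  (hdeg : forall u, degree G u = degree G' u) (a c : V) :
  G a c < G' a c -> exists a b c d, good G G' a b c d.
Proof.
move=> hac.
case: (eqVneq a c) => [E|ac].
- subst c.
  have [b [d [hb [hd hor]]]] := F2 hdeg hl' hac.
  case: (eqVneq b d) => [E|bd].
  + subst d; case: hor => [//|h2].
    case: (eqVneq (G b b) 0) => [h0|h0].
      by exists a, b, a, b; split => //; right.
    apply: (Xstep2 hs hs' hl' hdeg hac hb); have := hl b; lia.
  + exists a, b, a, d; split => //.
    * left => -[[_ E]|[E1 E2]]; first by move: bd; rewrite E eqxx.
      subst; lia.
    * by left; apply/eqP.
- have [b hb] := F1gen hdeg hac.
  have hca : G c a < G' c a by rewrite hs hs'.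
  have [d hd] := F1gen hdeg hca.
  case: (eqVneq b d) => [E|bd].
  + subst d.
    case: (eqVneq (G b b) 0) => [h0|h0].
      exists a, b, c, b; split => //; last by right.
      left => -[[E1 E2]|[E1 E2]]; first by move: ac; rewrite E1 eqxx.
      subst; lia.
    apply: (@Xstep V G G' hs hs' hdeg b a c).
    * have := hl b; have := hl' b; lia.
    * by apply/eqP.
    * by rewrite hs hs'.
    * by rewrite hs hs'.
  + exists a, b, c, d; split => //.
    * left => -[[E1 E2]|[E1 E2]]; first by move: ac; rewrite E1 eqxx.
      subst; lia.
    * by left; apply/eqP.
Qed.



Definition swapG (V : finType) (G : graph V) (a b c d : V) : graph V :=
  fun i j => G i j - edge1 a b i j - edge1 c d i j + edge1 a c i j + edge1 b d i j.

Definition dist (V : finType) (G H : graph V) : nat :=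
  \sum_(i : V) \sum_(j : V) ((G i j - H i j) + (H i j - G i j)).

Lemma sum2_le_gen (V : finType) (f d g e : V -> V -> nat) :
  (forall i j, f i j + d i j <= g i j + e i j) ->
  \sum_i \sum_j f i j + \sum_i \sum_j d i j <= \sum_i \sum_j g i j + \sum_i \sum_j e i j.
Proof.
move=> H; rewrite -!big_split /=; apply: leq_sum => i _.
rewrite -!big_split /=; apply: leq_sum => j _; exact: H.
Qed.

Lemma sum2_split (V : finType) (f g : V -> V -> nat) :
  \sum_i \sum_j (f i j + g i j) = \sum_i \sum_j f i j + \sum_i \sum_j g i j.
Proof. rewrite -big_split; apply: eq_bigr => i _; exact: big_split. Qed.

Lemma sum2_edge1_ge1 (V : finType) (a b : V) : 1 <= \sum_i \sum_j edge1 a b i j.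
Proof. rewrite (bigD1 a) //= (bigD1 b) //= edge1_self; lia. Qed.

Lemma sum2_edge1_le2 (V : finType) (a b : V) : \sum_i \sum_j edge1 a b i j <= 2.
Proof.
have := @sum2_le_gen V (edge1 a b) (fun _ _ => 0) (fun i j => (i == a) * (j == b))
   (fun i j => (i == b) * (j == a)).
rewrite !sum2_ind !big1_eq addn0; apply => i j; rewrite addn0; exact: edge1_bound.
Qed.

Lemma pair_eq (V : finType) (H : graph V) (hs : symmetric_graph H) (i j a b : V) :
  (i = a /\ j = b) \/ (i = b /\ j = a) -> H i j = H a b.
Proof. by case => -[-> ->] //; rewrite hs. Qed.

Lemma arith (g g' e1 e2 e3 e4 : nat) : e1 <= 1 -> e2 <= 1 -> e3 <= 1 -> e4 <= 1 ->
  (0 < e1 + e2 -> g' + e1 + e2 <= g) -> (e3 = 1 -> g < g') ->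
  ((g - e1 - e2 + e3 + e4) - g') + (g' - (g - e1 - e2 + e3 + e4)) + (e1 + e2 + e3)
   <= (g - g') + (g' - g) + e4.
Proof. lia. Qed.

Lemma swap_ok (V : finType) (k : V -> nat) (G G' : graph V)
  (hG : in_Glm k G) (hG' : in_Glm k G') (a b c d : V) :
  good G G' a b c d ->
  in_Glm k (swapG G a b c d) /\ double_edge_swap G (swapG G a b c d) /\
  dist (swapG G a b c d) G' < dist G G'.
Proof.
case: hG => -[hs hl] hdG; case: hG' => -[hs' hl'] hdG'.
case=> hac hab hcd h4 h5.
have rem : forall i j, 0 < edge1 a b i j + edge1 c d i j ->
    G' i j + edge1 a b i j + edge1 c d i j <= G i j.
  move=> i j; case: (edge1P a b i j) => [e1|[e1 h1]];
    case: (edge1P c d i j) => [e2|[e2 h2]]; rewrite e1 e2 //.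
  - by rewrite (pair_eq hs h2) (pair_eq hs' h2); lia.
  - by rewrite (pair_eq hs h1) (pair_eq hs' h1); lia.
  - rewrite (pair_eq hs h1) (pair_eq hs' h1).
    case: h4 => [h4|]; last by lia.
    exfalso; apply: h4.
    case: h1 => -[? ?]; case: h2 => -[? ?]; subst; intuition.
have feas : forall i j, edge1 a b i j + edge1 c d i j <= G i j.
  move=> i j; case: (posnP (edge1 a b i j + edge1 c d i j)) => [->//|p].
  have := rem i j p; lia.
have add3 : forall i j, edge1 a c i j = 1 -> G i j < G' i j.
  move=> i j; case: (edge1P a c i j) => [->//|[_ h]] _.
  by rewrite (pair_eq hs h) (pair_eq hs' h).
have hS : symmetric_graph (swapG G a b c d).
  move=> i j; rewrite /swapG hs (edge1_sym a b i j) (edge1_sym c d i j)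
     (edge1_sym a c i j) (edge1_sym b d i j) //.
have hL : forall u, swapG G a b c d u u <= 1.
  move=> u; rewrite /swapG.
  have := hl u; have := hl' u; have := edge1_le1 a b u u; have := edge1_le1 c d u u.
  case: (edge1P a c u u) => [->|[e3 h3]]; case: (edge1P b d u u) => [->|[e4 h4']].
  - lia.
  - rewrite e4.
    have [eb ed] : b = u /\ d = u by case: h4' => -[-> ->].
    have : G u u = 0.
      case: h5 => [h5|h5]; first by exfalso; apply: h5; rewrite eb ed.
      by rewrite -eb.
    lia.
  - rewrite e3; have := add3 u u e3; lia.
  - exfalso.
    case: h3 => -[? ?]; case: h4' => -[? ?]; subst; lia.
have hD : forall u, degree (swapG G a b c d) u = k u.
  move=> u.
  have E : degree (swapG G a b c d) u + degree (edge1 a b) u + degree (edge1 c d) u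
         = degree G u + degree (edge1 a c) u + degree (edge1 b d) u.
    rewrite /degree.
    have Hp : forall v, swapG G a b c d u v + edge1 a b u v + edge1 c d u v
                  = G u v + edge1 a c u v + edge1 b d u v.
      move=> v; have := feas u v; rewrite /swapG; lia.
    have := Hp u.
    have S1 : \sum_v swapG G a b c d u v + \sum_v edge1 a b u v + \sum_v edge1 c d u v
            = \sum_v G u v + \sum_v edge1 a c u v + \sum_v edge1 b d u v.
      rewrite -!big_split /=; apply: eq_bigr => v _; exact: Hp.
    lia.
  move: E; rewrite !degree_edge1 hdG; lia.
split; first by split.
split.
  exists a, b, c, d; split => //.
have key := @sum2_le_gen V
  (fun i j => (swapG G a b c d i j - G' i j) + (G' i j - swapG G a b c d i j))
  (fun i j => edge1 a b i j + edge1 c d i j + edge1 a c i j)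
  (fun i j => (G i j - G' i j) + (G' i j - G i j))
  (fun i j => edge1 b d i j).
rewrite !sum2_split in key.
have := sum2_edge1_ge1 a b; have := sum2_edge1_ge1 c d; have := sum2_edge1_ge1 a c;
have := sum2_edge1_le2 b d.
rewrite /dist.
have P : forall i j,
  (swapG G a b c d i j - G' i j) + (G' i j - swapG G a b c d i j) +
  (edge1 a b i j + edge1 c d i j + edge1 a c i j) <=
  (G i j - G' i j) + (G' i j - G i j) + edge1 b d i j.
  move=> i j; rewrite /swapG; apply: arith; try exact: edge1_le1.
  - exact: rem.
  - exact: add3.
have := key P; rewrite !sum2_split; lia.
Qed.

Theorem main_ind (V : finType) (k : V -> nat) (G' : graph V) (hG' : in_Glm k G') :
  forall m (G : graph V), in_Glm k G -> dist G G' < m ->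
  clos_refl_trans_1n (graph V) (Glm_adj k) G G'.
Proof.
elim => [//|m IH] G hG hd.
have hdeg : forall u, degree G u = degree G' u.
  by move=> u; rewrite hG.2 hG'.2.
have hdeg' : forall u, degree G' u = degree G u by move=> u; rewrite hdeg.
case: (pickP (fun p : V * V => G p.1 p.2 < G' p.1 p.2)) => [[a c] /= hac | hn].
  have [a' [b' [c' [d' hgood]]]] :=
    exists_good hG.1.1 hG'.1.1 hG.1.2 hG'.1.2 hdeg hac.
  have [h1 [h2 h3]] := swap_ok hG hG' hgood.
  apply: (@rt1n_trans _ _ _ (swapG G a' b' c' d')).
    split; first exact: hG.
    split; first exact: h1.
    split; last exact: h2.
    by move=> E; move: h3; rewrite -E ltnn.
  apply: IH => //; exact: leq_trans h3 (ltnSE hd).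
case: (pickP (fun p : V * V => G' p.1 p.2 < G p.1 p.2)) => [[a c] /= hac | hn2].
  have [b hb] := F1gen hdeg' hac.
  by move: (hn (a, b)); rewrite /= hb.
have E : G = G'.
  apply: functional_extensionality => i; apply: functional_extensionality => j.
  have h1 := hn (i, j); have h2 := hn2 (i, j); simpl in h1, h2.
  by apply: anti_leq; rewrite leqNgt h2 /= leqNgt h1.
rewrite E; exact: rt1n_refl.
Qed.


Theorem theorem1 (V : finType) (n : nat) (k : V -> nat)
  (hn : #|V| = n) (hk : forall u : V, 1 <= k u)
  (G G' : graph V) (hG : in_Glm k G) (hG' : in_Glm k G') :
  clos_refl_trans_1n (graph V) (Glm_adj k) G G'.
Proof. exact: (@main_ind V k G' hG' _ G hG (ltnSn _)). Qed.
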